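(* Let $R$ be a valuation domain of cardinality $\aleph_1$ and $J/R$ a type with $J$ not countably generated. If $J/R$ is essentially countable, then (i) $\Gamma'(J/R)=0$ and (ii) $\Gamma(J/R)=1$.
   Context: A valuation domain is an integral domain whose ideals are linearly ordered; $Q$ is its quotient field, $R^*$ its group of units. For $x,y\in R$, $x\equiv y \pmod r$ means $x-y\in rR$. A type $J/R$ is given by an $R$-submodule $J$ of $Q$ with $R\subseteq J$; write $J=\bigcup_{\sigma<\omega_1} r_\sigma^{-1}R$ with nonzero $r_\sigma\in R$, $r_\tau\mid r_\sigma$ and $r_\sigma\nmid r_\tau$ for $\tau<\sigma$. The type is essentially uncountable if for every $\sigma$ there is $\tau>\sigma$ with $r_\sigma R/r_\tau R$ uncountable, and essentially countable otherwise. A cub is a closed unbounded subset of $\omega_1$. $D(\omega_1)$ is the Boolean algebra of subsets of $\omega_1$ modulo the relation $S_1\sim S_2$ iff $S_1\cap C=S_2\cap C$ for some cub $C$; $\tilde S$ is the class of $S$; $0$ is the class of sets disjoint from a cub and $1$ the class of sets containing a cub. $\Gamma(J/R)=\tilde S$ where $S$ is the set of limit ordinals $\delta<\omega_1$ such that $R/\bigcap_{\sigma<\delta} r_\sigma R$ is not complete in the metrizable linear topology having the submodules $r_\sigma R/\bigcap_{\sigma'<\delta}r_{\sigma'}R$ ($\sigma<\delta$) as a basis of neighbourhoods of $0$. For a limit $\delta<\omega_1$, ${\cal T}^\delta_{J/R}$ is the set of sequences $\langle u_\sigma:\sigma<\delta\rangle$ with $u_\sigma\in R^*$ and $u_\tau-u_\sigma\in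 r_\sigma R$ for all $\sigma<\tau<\delta$. An $\omega_1$-filtration of $R$ by subrings is an increasing chain $\{N_\alpha:\alpha<\omega_1\}$ of countable subrings with $R=\bigcup_\alpha N_\alpha$ and $N_\alpha=\bigcup_{\beta<\alpha}N_\beta$ for limit $\alpha$. Fixing such a filtration, $\Gamma'(J/R)=\tilde{E'}$ where $E'$ is the set of limit $\delta<\omega_1$ for which there exists $\langle u_\sigma:\sigma<\delta\rangle\in{\cal T}^\delta_{J/R}$ such that for every $f\in R^*$ there is $\sigma<\delta$ such that there is no $n\in N_\delta$ with $u_\sigma f\equiv n\pmod{r_\sigma}$. Both $\Gamma$ and $\Gamma'$ are independent of the choices of the $r_\sigma$ and of the filtration. *)

(* Defs.v *)
From HB Require Import structures.
From mathcomp Require Import all_boot all_order all_algebra fraction.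
Set Implicit Arguments. Unset Strict Implicit. Unset Printing Implicit Defensive.
Import GRing.Theory.
Local Open Scope ring_scope.

Notation "x %:F" := (@FracField.tofrac _ x).

(** * The first uncountable ordinal omega_1, given axiomatically:
    an uncountable strict well-order all of whose proper initial segments
    are countable.  Any such order is order-isomorphic to omega_1. *)
Record omega1 := Omega1 {
  o1T :> Type;
  o1lt : o1T -> o1T -> Prop;
  o1_irrefl : forall x, ~ o1lt x x;
  o1_trans : forall x y z, o1lt x y -> o1lt y z -> o1lt x z;
  o1_total : forall x y, o1lt x y \/ x = y \/ o1lt y x;
  o1_wf : well_founded o1lt;
  o1_uncountable : forall f : nat -> o1T, exists x, forall n, f n <> x;
  o1_segments_countable :
    forall y, exists f : nat -> o1T, forall x, o1lt x y -> exists n, f n = x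
}.

Section Omega1Defs.
Variable W : omega1.
Local Notation "x <w y" := (o1lt x y) (at level 70).

Definition is_limit (d : W) : Prop :=
  (exists x, x <w d) /\ forall x, x <w d -> exists y, x <w y /\ y <w d.

Definition unbounded (C : W -> Prop) : Prop :=
  forall x, exists y, C y /\ x <w y.
Definition closed (C : W -> Prop) : Prop :=
  forall d, is_limit d ->
    (forall x, x <w d -> exists y, C y /\ x <w y /\ y <w d) -> C d.
Definition cub (C : W -> Prop) : Prop := closed C /\ unbounded C.

Definition D_equiv (S1 S2 : W -> Prop) : Prop :=
  exists C, cub C /\ forall x, C x -> (S1 x <-> S2 x).
Definition D_zero (S : W -> Prop) : Prop := D_equiv S (fun _ => False).
Definition D_one (S : W -> Prop) : Prop := D_equiv S (fun _ => True).

Variable R : idomainType.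

Definition in_pideal (r x : R) : Prop := exists c, x = c * r.
Definition congr_mod (r x y : R) : Prop := in_pideal r (x - y).

Definition is_ideal (I : R -> Prop) : Prop :=
  I 0 /\ (forall x y, I x -> I y -> I (x + y)) /\ (forall a x, I x -> I (a * x)).
Definition valuation_domain : Prop :=
  forall I J, is_ideal I -> is_ideal J ->
    (forall x, I x -> J x) \/ (forall x, J x -> I x).

Definition card_aleph1 : Prop := exists f : R -> W, bijective f.

Definition is_type (J : {fraction R} -> Prop) : Prop :=
  J 0 /\ (forall x y, J x -> J y -> J (x + y)) /\
  (forall (a : R) x, J x -> J (a%:F * x)) /\ (forall a : R, J a%:F).

Definition countably_generated (J : {fraction R} -> Prop) : Prop :=
  exists g : nat -> {fraction R},
    forall x, J x <-> exists (n : nat) (a : nat -> R),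
                        x = \sum_(i < n) (a i)%:F * g i.

Definition type_repr (J : {fraction R} -> Prop) (r : W -> R) : Prop :=
  (forall s, r s != 0) /\
  (forall t s, t <w s -> in_pideal (r t) (r s) /\ ~ in_pideal (r s) (r t)) /\
  (forall x, J x <-> exists s (a : R), x = a%:F / (r s)%:F).

Definition quot_uncountable (rs rt : R) : Prop :=
  ~ exists f : nat -> R, forall x, in_pideal rs x ->
      exists n, in_pideal rs (f n) /\ congr_mod rt x (f n).

Definition essentially_uncountable (r : W -> R) : Prop :=
  forall s, exists t, s <w t /\ quot_uncountable (r s) (r t).
Definition essentially_countable (r : W -> R) : Prop :=
  ~ essentially_uncountable r.

(** R / \bigcap_{s<d} r_s R is complete in the (metrizable) linear topology
    with basis r_s R / \bigcap_{s'<d} r_s' R (s < d): every Cauchy sequence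
    converges.  Since \bigcap_{s'<d} r_s' R is contained in every r_s R,
    congruence modulo r_s R in the quotient is congruence modulo r_s in R. *)
Definition complete_at (r : W -> R) (d : W) : Prop :=
  forall x : nat -> R,
    (forall s, s <w d -> exists N, forall m n, (N <= m)%N -> (N <= n)%N ->
        congr_mod (r s) (x m) (x n)) ->
    exists y, forall s, s <w d -> exists N, forall n, (N <= n)%N ->
        congr_mod (r s) (x n) y.

(** the set S with Gamma(J/R) = tilde S *)
Definition Gamma_set (r : W -> R) : W -> Prop :=
  fun d => is_limit d /\ ~ complete_at r d.

Definition is_subring (N : R -> Prop) : Prop :=
  N 1 /\ (forall x y, N x -> N y -> N (x - y)) /\
  (forall x y, N x -> N y -> N (x * y)).
Definition filtration (N : W -> R -> Prop) : Prop :=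
  (forall a, is_subring (N a)) /\
  (forall a, exists f : nat -> R, forall x, N a x -> exists n, f n = x) /\
  (forall b a, b <w a -> forall x, N b x -> N a x) /\
  (forall x, exists a, N a x) /\
  (forall a, is_limit a -> forall x, N a x -> exists b, b <w a /\ N b x).

(** the set E' with Gamma'(J/R) = tilde E' *)
Definition Gamma'_set (r : W -> R) (N : W -> R -> Prop) : W -> Prop :=
  fun d => is_limit d /\
    exists u : W -> R,
      (forall s, s <w d -> u s \is a GRing.unit) /\
      (forall s t, s <w t -> t <w d -> congr_mod (r s) (u t) (u s)) /\
      (forall f : R, f \is a GRing.unit ->
         exists s, s <w d /\ ~ exists n, N d n /\ congr_mod (r s) (u s * f) n).

End Omega1Defs.

(* Main.v *)
Require Import Defs.
From mathcomp Require Import all_boot all_order all_algebra fraction ring.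
Import GRing.Theory.
From Stdlib Require Import Classical IndefiniteDescription.
Set Implicit Arguments. Unset Strict Implicit.
Local Open Scope ring_scope.

Lemma o1_bound (W : omega1) (h : nat -> W) : exists y, forall n, o1lt (h n) y.
Proof.
apply: NNPP => H.
have H1 : forall y : W, exists n, ~ o1lt (h n) y.
  move=> y; apply: NNPP => H2; apply: H; exists y => n.
  by apply: NNPP => H3; apply: H2; exists n.
have [fs Hfs] := functional_choice _ (fun n => o1_segments_countable (h n)).
pose e (m : nat) : W := match unpickle m with
  | Some (n, k) => if k is k'.+1 then fs n k' else h n
  | None => h 0%N end.
have [x Hx] := o1_uncountable e.
have [n Hn] := H1 x.
case: (o1_total x (h n)) => [Hlt|[Heq|Hgt]] //.
- have [k Hk] := Hfs n x Hlt.
  apply: (Hx (pickle (n, k.+1))); by rewrite /e pickleK.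
- apply: (Hx (pickle (n, 0%N))); by rewrite /e pickleK.
Qed.

Lemma o1_least (W : omega1) (P : W -> Prop) (x : W) :
  P x -> exists y, P y /\ forall z, o1lt z y -> ~ P z.
Proof.
move: x; apply: (well_founded_ind (@o1_wf W)) => x IH Px.
case: (classic (exists z, o1lt z x /\ P z)) => [[z [Hz Pz]]|Hn].
- exact: IH Hz Pz.
- exists x; split => // z Hz Pz; apply: Hn; by exists z.
Qed.

Lemma o1_sup (W : omega1) (m : nat -> W) :
  (forall n, o1lt (m n) (m n.+1)) ->
  exists d, is_limit d /\ (forall n, o1lt (m n) d) /\
    (forall t, o1lt t d -> exists n, o1lt t (m n)).
Proof.
move=> Hm.
have [y Hy] := o1_bound m.
have [d [Hd Hmin]] := o1_least (P := fun y => forall n, o1lt (m n) y) Hy.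
have Hcof : forall t, o1lt t d -> exists n, o1lt t (m n).
  move=> t Ht.
  have : ~ (forall n, o1lt (m n) t) by exact: Hmin.
  move=> Hnot; apply: NNPP => Hc; apply: Hnot => n.
  case: (o1_total (m n) t) => [//|[Heq|Hgt]].
  - exfalso; apply: Hc; exists n.+1; rewrite -Heq; exact: Hm.
  - exfalso; apply: Hc; by exists n.
exists d; split; last by split.
split; first by exists (m 0%N).
move=> x Hx; have [n Hn] := Hcof x Hx; exists (m n); by split.
Qed.

Lemma cubN (W : omega1) (R : idomainType) (s0 : W) (G : W -> nat -> R)
  (N : W -> R -> Prop) :
  (forall b a x, o1lt b a -> N b x -> N a x) -> (forall x, exists a, N a x) ->
  cub (fun d => is_limit d /\ o1lt s0 d /\ forall t, o1lt t d -> forall k, N d (G t k)).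
Proof.
move=> Hmono Hcov.
split.
- move=> d Hd Hcl; split => //.
  have [x Hx] := Hd.1.
  have [y [[_ [Hy _]] [_ Hyd]]] := Hcl x Hx.
  split; first exact: o1_trans Hy Hyd.
  move=> t Ht k.
  have [y' [[_ [_ Hy']] [Hty Hyd']]] := Hcl t Ht.
  exact: Hmono (Hy' t Hty k).
- have [idx Hidx] := functional_choice _ Hcov.
  have [fs Hfs] := functional_choice _ (fun a : W => o1_segments_countable a).
  have Hstep : forall a : W, exists b, o1lt a b /\
      forall t, o1lt t a -> forall k, N b (G t k).
    move=> a.
    pose h (j : nat) : W := match j with
      | j'.+1 => match unpickle j' with
                 | Some (i, k) => idx (G (fs a i) k) | None => a end
      | 0%N => a end.
    have [y Hy] := o1_bound h.
    exists y; split; first exact: (Hy 0%N).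
    move=> t Ht k.
    have [i Hi] := Hfs a t Ht.
    have := Hy (pickle (i, k)).+1; rewrite /h pickleK Hi => H.
    exact: Hmono (Hidx _).
  have [step Hst] := functional_choice _ Hstep.
  move=> x.
  have [m0 Hm0] := o1_bound (fun n : nat => if n is 0%N then x else s0).
  pose m (n : nat) := iter n step m0.
  have Hm : forall n, o1lt (m n) (m n.+1) by move=> n; exact: (Hst _).1.
  have [d [Hd [Hmd Hcof]]] := o1_sup Hm.
  exists d; split; last exact: o1_trans (Hm0 0%N) (Hmd 0%N).
  split => //; split; first exact: o1_trans (Hm0 1%N) (Hmd 0%N).
  move=> t Ht k.
  have [n Hn] := Hcof t Ht.
  have := (Hst (m n)).2 t Hn k => H.
  exact: Hmono (Hmd n.+1) H.
Qed.

Section Ideal.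
Variable R : idomainType.
Implicit Types a b c x y : R.
Lemma ip_refl a : in_pideal a a. Proof. by exists 1; rewrite mul1r. Qed.
Lemma ip0 a : in_pideal a 0. Proof. by exists 0; rewrite mul0r. Qed.
Lemma ip_trans a b c : in_pideal a b -> in_pideal b c -> in_pideal a c.
Proof. move=> [u ->] [v ->]; exists (v * u); by rewrite mulrA. Qed.
Lemma ipD a x y : in_pideal a x -> in_pideal a y -> in_pideal a (x + y).
Proof. move=> [u ->] [v ->]; exists (u + v); by rewrite mulrDl. Qed.
Lemma ipN a x : in_pideal a x -> in_pideal a (- x).
Proof. move=> [u ->]; exists (- u); by rewrite mulNr. Qed.
Lemma ipB a x y : in_pideal a x -> in_pideal a y -> in_pideal a (x - y).
Proof. move=> Hx Hy; apply: ipD => //; exact: ipN. Qed.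
Lemma ipMl a x y : in_pideal a x -> in_pideal a (y * x).
Proof. move=> [u ->]; exists (y * u); by rewrite mulrA. Qed.
Lemma ipMr a x y : in_pideal a x -> in_pideal a (x * y).
Proof. move=> H; rewrite mulrC; exact: ipMl. Qed.
End Ideal.

Lemma cantor (F : (nat -> bool) -> nat) :
  exists e e', F e = F e' /\ exists k, e k <> e' k.
Proof.
have HG : forall n, exists e : nat -> bool, (exists e0, F e0 = n) -> F e = n.
  move=> n; case: (classic (exists e0, F e0 = n)) => [[e0 He0]|Hn].
  - by exists e0.
  - by exists (fun _ => false).
have [G HGs] := functional_choice _ HG.
pose es := fun n => ~~ G n n.
exists es, (G (F es)); split.
- by rewrite HGs //; exists es.
- exists (F es); rewrite /es; by case: (G _ _).
Qed.

Lemma not_complete (W : omega1) (R : idomainType) (r : W -> R) (s0 d : W) :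
  (forall t s, o1lt t s -> in_pideal (r t) (r s) /\ ~ in_pideal (r s) (r t)) ->
  (forall t, o1lt s0 t -> ~ quot_uncountable (r s0) (r t)) ->
  is_limit d -> o1lt s0 d -> ~ complete_at r d.
Proof.
move=> Hr Hq Hd Hs0 Hcomp.
have [fd Hfd] := o1_segments_countable d.
have Hnext : forall p : W * W, exists y : W,
    o1lt p.1 d -> o1lt p.1 y /\ o1lt y d /\ (o1lt p.2 d -> o1lt p.2 y).
  move=> [a b] /=.
  case: (classic (o1lt a d)) => Ha; last by exists a.
  have [ya [Hya1 Hya2]] := Hd.2 a Ha.
  case: (classic (o1lt b d)) => Hb; last by exists ya.
  have [yb [Hyb1 Hyb2]] := Hd.2 b Hb.
  case: (o1_total ya yb) => [Hl|[He|Hg]].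
  - exists yb => _; split; [exact: o1_trans Hya1 Hl|by split].
  - exists yb => _; split; [by rewrite -He|by split].
  - exists ya => _; split => //; split => // _; exact: o1_trans Hyb1 Hg.
have [next Hn] := functional_choice _ Hnext.
pose sg := fix sg (n : nat) : W :=
  match n with 0%N => s0 | n'.+1 => next (sg n', fd n') end.
have Hsd : forall n, o1lt (sg n) d.
  elim=> [//|n IH] /=; exact: ((Hn (sg n, fd n)) IH).2.1.
have Hss : forall n, o1lt (sg n) (sg n.+1).
  move=> n /=; exact: ((Hn (sg n, fd n)) (Hsd n)).1.
have Hcof : forall t, o1lt t d -> exists n, o1lt t (sg n).
  move=> t Ht; have [n Hn'] := Hfd t Ht; exists n.+1 => /=.
  rewrite -Hn' in Ht *; exact: ((Hn (sg n, fd n)) (Hsd n)).2.2 Ht.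
have Hdiv : forall i j, (i <= j)%N -> in_pideal (r (sg i)) (r (sg j)).
  move=> i; elim=> [|j IH].
  - rewrite leqn0 => /eqP ->; exact: ip_refl.
  - rewrite leq_eqVlt => /orP [/eqP ->|Hij]; first exact: ip_refl.
    exact: ip_trans (IH Hij) (Hr _ _ (Hss j)).1.
pose tm (e : nat -> bool) n := if e n then r (sg n) else 0.
pose x (e : nat -> bool) m := \sum_(n < m) tm e n.
have Htm : forall e n, in_pideal (r (sg n)) (tm e n).
  move=> e n; rewrite /tm; case: (e n); [exact: ip_refl|exact: ip0].
have HxS : forall e m, x e m.+1 = x e m + tm e m.
  by move=> e m; rewrite /x big_ord_recr.
have Htail : forall e N k, in_pideal (r (sg N)) (x e (N + k)%N - x e N).
  move=> e N; elim=> [|k IH]; first by rewrite addn0 subrr; exact: ip0.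
  rewrite addnS HxS addrAC; apply: ipD => //.
  apply: ip_trans (Htm e _); apply: Hdiv; exact: leq_addr.
have Htail' : forall e N M, (N <= M)%N -> in_pideal (r (sg N)) (x e M - x e N).
  move=> e N M HNM; rewrite -(subnKC HNM); exact: Htail.
have Hcauchy : forall e s, o1lt s d -> exists N, forall m n, (N <= m)%N -> (N <= n)%N ->
    congr_mod (r s) (x e m) (x e n).
  move=> e s Hs; have [n0 Hn0] := Hcof s Hs; exists n0 => m n Hm Hn2.
  rewrite /congr_mod.
  have -> : x e m - x e n = (x e m - x e n0) - (x e n - x e n0) by ring.
  apply: ip_trans (Hr _ _ Hn0).1 _; apply: ipB; exact: Htail'.
have [y Hy] := functional_choice _ (fun e => Hcomp (x e) (Hcauchy e)).
have Hys0 : forall e, in_pideal (r s0) (y e).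
  move=> e; have [N HN] := Hy e s0 Hs0.
  have H1 := HN N (leqnn N).
  have H2 : in_pideal (r s0) (x e N).
    have := Htail' e 0%N N (leq0n N).
    by rewrite /x big_ord0 subr0.
  have -> : y e = x e N - (x e N - y e) by ring.
  exact: ipB.
have Hdiff : forall e e' k, (forall i, (i < k)%N -> e i = e' i) -> e k <> e' k ->
    ~ in_pideal (r (sg k.+1)) (y e - y e').
  move=> e e' k Hlt Hk Hc.
  have [N1 HN1] := Hy e _ (Hsd k.+1).
  have [N2 HN2] := Hy e' _ (Hsd k.+1).
  pose M := maxn (maxn N1 N2) k.+1.
  have HM1 : (N1 <= M)%N by rewrite /M !leq_max leqnn.
  have HM2 : (N2 <= M)%N by rewrite /M !leq_max leqnn orbT.
  have HMk : (k.+1 <= M)%N by rewrite /M leq_max leqnn orbT.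
  have Ha := HN1 M HM1. have Hb := HN2 M HM2.
  rewrite /congr_mod in Ha Hb.
  have Hxk : x e k = x e' k.
    rewrite /x; apply: eq_bigr => i _; by rewrite /tm Hlt.
  have Hk1 : in_pideal (r (sg k.+1)) (tm e k - tm e' k).
    have -> : tm e k - tm e' k = (x e M - y e) + (y e - y e') - (x e' M - y e')
        - (x e M - x e k.+1) + (x e' M - x e' k.+1).
      rewrite !HxS Hxk; ring.
    apply: ipD; last exact: Htail'.
    apply: ipB; last exact: Htail'.
    apply: ipB => //; exact: ipD.
  apply: (Hr _ _ (Hss k)).2.
  move: Hk1; rewrite /tm; case: (e k) Hk; case: (e' k) => // _.
  - by rewrite subr0.
  - by rewrite sub0r => /ipN; rewrite opprK.
have [f Hf] : exists f : nat -> R, forall z, in_pideal (r s0) z ->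
    exists n, in_pideal (r s0) (f n) /\ congr_mod (r d) z (f n).
  exact: NNPP (Hq d Hs0).
have [F HF] := functional_choice _ (fun e => Hf (y e) (Hys0 e)).
have [e [e' [HFe [k0 Hk0]]]] := cantor F.
have exk : exists k, e k != e' k by exists k0; apply/eqP.
case: (ex_minnP exk) => k /eqP Hk Hmin.
apply: (Hdiff e e' k) => //.
- move=> i Hi; apply/eqP; apply: contraTT Hi => Hne; rewrite -leqNgt; exact: Hmin.
- apply: ip_trans (Hr _ _ (Hsd k.+1)).1 _.
  have H1 := (HF e).2. have H2 := (HF e').2. rewrite HFe in H1.
  rewrite /congr_mod in H1 H2.
  have -> : y e - y e' = (y e - f (F e')) - (y e' - f (F e')) by ring.
  exact: ipB.
Qed.

Unset Implicit Arguments. Set Strict Implicit.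
Theorem mainTheorem5 (W : omega1) (R : idomainType)
  (J : {fraction R} -> Prop) (r : W -> R) :
  valuation_domain R ->
  card_aleph1 W R ->
  is_type J ->
  ~ countably_generated J ->
  type_repr J r ->
  essentially_countable r ->
  (forall N : W -> R -> Prop, filtration N -> D_zero (Gamma'_set r N)) /\
  D_one (Gamma_set r).
Proof.
move=> _ _ _ _ [_ [Hr _]] Hec.
have [s0 Hs0] : exists s0, forall t, o1lt s0 t -> ~ quot_uncountable (r s0) (r t).
  apply: NNPP => H; apply: Hec => s; apply: NNPP => H2; apply: H; exists s.
  move=> t Ht Hq; apply: H2; exists t; by split.
have HGex : forall t : W, exists g : nat -> R, o1lt s0 t -> forall z,
    in_pideal (r s0) z -> exists k, in_pideal (r s0) (g k) /\ congr_mod (r t) z (g k).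
  move=> t; case: (classic (o1lt s0 t)) => Ht.
  - have [f Hf] := NNPP _ (Hs0 t Ht); by exists f.
  - by exists (fun _ => 0).
have [G HG] := functional_choice _ HGex.
split.
- move=> N [Hsub [_ [Hmono [Hcov _]]]].
  exists (fun d => is_limit d /\ o1lt s0 d /\ forall t, o1lt t d -> forall k, N d (G t k)).
  split; first by apply: cubN => // b a x Hba; exact: Hmono.
  move=> d [Hd [Hs0d HNG]]; split=> // [[_ [u [Hu [Huc Hf]]]]].
  have [sg [H1 H2]] := Hd.2 s0 Hs0d.
  have Husg := Hu sg H2.
  pose v := (u sg)^-1.
  have E : u sg * v = 1 by rewrite /v mulrV.
  have [s [Hs Hno]] := Hf v (eq_ind_r is_true Husg (unitrV (u sg))).
  apply: Hno.
  have [N1 [NB _]] := Hsub d.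
  case: (o1_total s sg) => [Hlt|[Heq|Hgt]].
  - exists 1; split => //; rewrite /congr_mod.
    have -> : u s * v - 1 = - ((u sg - u s) * v) by rewrite mulrBl E opprB.
    apply: ipN; apply: ipMr; exact: Huc s sg Hlt H2.
  - exists 1; split => //; rewrite Heq E /congr_mod subrr; exact: ip0.
  - pose z := (u s - u sg) * v.
    have Hz : in_pideal (r s0) z.
      apply: ipMr; apply: ip_trans (Hr _ _ H1).1 _; exact: Huc sg s Hgt Hs.
    have [k [_ Hk]] := HG s (o1_trans H1 Hgt) z Hz.
    exists (1 + G s k); split.
    + have -> : 1 + G s k = 1 - ((1 - 1) - G s k) by ring.
      exact: (NB _ _ N1 (NB _ _ (NB _ _ N1 N1) (HNG s Hs k))).
    + rewrite /congr_mod.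
      have -> : u s * v - (1 + G s k) = z - G s k by rewrite /z mulrBl E; ring.
      exact: Hk.
- exists (fun d => is_limit d /\ o1lt s0 d /\ forall t, o1lt t d -> forall k, (fun _ _ => True) d (G t k)).
  split; first by apply: (@cubN W R s0 G (fun _ _ => True)) => // x; exists s0.
  move=> d [Hd [Hs0d _]]; split=> // _; split => //.
  exact: not_complete Hr Hs0 Hd Hs0d.
Qed.
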